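(* Let $X_0=0$ and $X_n=\sum_{j=1}^{X_{n-1}}\xi_{n,j}+\varepsilon_n$ for $n\ge 1$, where $\{\xi_{n,j},\varepsilon_n : n,j\in\mathbb N\}$ are independent nonnegative integer-valued random variables and, for each $n$, the $\xi_{n,j}$, $j\in\mathbb N$, are identically distributed. Let $G_n(x)=\mathbb E x^{\xi_{n,1}}$, $\rho_n=G_n'(1)=\mathbb E\xi_{n,1}$, and assume $G_n''(1)<\infty$ for all $n$. Assume that $\varepsilon_n\sim\mathrm{Bernoulli}(m_{n,1})$ and that (i) $\rho_n<1$ for all $n$, $\lim_{n\to\infty}\rho_n=1$, $\sum_{n=1}^\infty(1-\rho_n)=\infty$, and $\lim_{n\to\infty}G_n''(1)/(1-\rho_n)=0$; (ii) $\lim_{n\to\infty} m_{n,1}/(1-\rho_n)=\lambda$ for some $\lambda\ge 0$. Then $X_n$ converges in distribution to $\mathrm{Poisson}(\lambda)$.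
   Context: $\mathrm{Poisson}(0)$ denotes the point mass at $0$. $\mathrm{Bernoulli}(p)$ is the distribution with $\mathbb P(1)=p=1-\mathbb P(0)$. *)

(* Defs.v *)
(* classical reals. Laws of nonnegative-integer-valued random
   variables are represented by their probability mass functions nat -> R. *)
From Stdlib Require Import Reals Factorial.
Open Scope R_scope.

Definition is_pmf (p : nat -> R) : Prop :=
  (forall k, 0 <= p k) /\ infinite_sum p 1.

Definition delta0 (k : nat) : R := match k with O => 1 | _ => 0 end.

Definition bernoulli (q : R) (k : nat) : R :=
  match k with O => 1 - q | 1%nat => q | _ => 0 end.

(* Poisson(lam); for lam = 0 this is the point mass at 0 since 0^0 = 1 *)
Definition poisson (lam : R) (k : nat) : R :=
  exp (- lam) * lam ^ k / INR (fact k).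

Definition convol (p q : nat -> R) (k : nat) : R :=
  sum_f_R0 (fun i => p i * q (k - i)%nat) k.

Fixpoint convpow (p : nat -> R) (m : nat) : nat -> R :=
  match m with
  | O => delta0
  | S m' => convol (convpow p m') p
  end.

(* L n is the law of X_n, where X_0 = 0 and
   X_n = sum_{j=1}^{X_{n-1}} xi_{n,j} + eps_n, with all xi_{n,j}, eps_n
   independent, xi_{n,j} ~ xi n (for every j), eps_n ~ eps n.
   By independence (and the law of total probability conditioning on X_{n-1}):
   P(X_n = k) = sum_m P(X_{n-1} = m) * P(xi_{n,1}+...+xi_{n,m} + eps_n = k). *)
Definition is_BPI_law (xi eps : nat -> nat -> R) (L : nat -> nat -> R) : Prop :=
  L 0%nat = delta0 /\
  forall (n : nat) (k : nat),
    infinite_sum (fun m => L n m * convol (convpow (xi (S n)) m) (eps (S n)) k)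
                 (L (S n) k).

(* convergence in distribution of nat-valued variables with laws L n to the law
   p: convergence of the distribution functions P(X_n <= x) at every x (for
   nat-valued laws F(x) = F(floor x), so it suffices to take x = k in nat;
   non-integer x are the continuity points, and this is equivalent). *)
Definition conv_in_dist (L : nat -> nat -> R) (p : nat -> R) : Prop :=
  forall k : nat, Un_cv (fun n => sum_f_R0 (L n) k) (sum_f_R0 p k).

(* Main.v *)
Require Import Defs.
From Stdlib Require Import Reals Lra Lia Psatz Arith.
From Coquelicot Require Import Coquelicot.
Open Scope R_scope.

Lemma ser_ext f g l : (forall k, f k = g k) -> infinite_sum f l -> infinite_sum g l.
Proof.
  intros H Hf e He. destruct (Hf e He) as [N HN]. exists N. intros n Hn.
  rewrite <- (sum_eq f g); [now apply HN | intros; apply H].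
Qed.

Lemma ser_le f g a b : (forall k, f k <= g k) -> infinite_sum f a -> infinite_sum g b -> a <= b.
Proof.
  intros H Ha Hb. eapply Rle_cv_lim; [|exact Ha|exact Hb].
  intros n; apply sum_Rle; auto.
Qed.

Lemma ser_scal f l c : infinite_sum f l -> infinite_sum (fun k => f k * c) (l * c).
Proof.
  intros H. assert (Un_cv (fun n => sum_f_R0 f n * c) (l * c)).
  { apply CV_mult; auto. intros e He; exists O; intros; unfold R_dist; rewrite Rminus_diag, Rabs_R0; auto. }
  intros e He; destruct (H0 e He) as [N HN]; exists N; intros n Hn.
  rewrite <- scal_sum, Rmult_comm. apply HN; auto.
Qed.

Lemma ser_minus f g a b : infinite_sum f a -> infinite_sum g b -> infinite_sum (fun k => f k - g k) (a - b).
Proof.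
  intros Ha Hb. pose proof (CV_minus _ _ _ _ Ha Hb) as H.
  intros e He; destruct (H e He) as [N HN]; exists N; intros n Hn.
  rewrite minus_sum. apply HN; auto.
Qed.

Lemma ser_plus f g a b : infinite_sum f a -> infinite_sum g b -> infinite_sum (fun k => f k + g k) (a + b).
Proof.
  intros Ha Hb. pose proof (CV_plus _ _ _ _ Ha Hb) as H.
  intros e He; destruct (H e He) as [N HN]; exists N; intros n Hn.
  rewrite plus_sum. apply HN; auto.
Qed.

Lemma ser_partial_le f l N : (forall k, 0 <= f k) -> infinite_sum f l -> sum_f_R0 f N <= l.
Proof.
  intros H Hl. apply (growing_ineq (sum_f_R0 f)); auto.
  intros n; simpl; specialize (H (S n)); lra.
Qed.

Lemma ser_nonneg f l : (forall k, 0 <= f k) -> infinite_sum f l -> 0 <= l.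
Proof. intros H Hl. eapply Rle_trans; [|apply (ser_partial_le f l 0); auto]. simpl; auto. Qed.

Lemma ser_term_le f l k : (forall k, 0 <= f k) -> infinite_sum f l -> f k <= l.
Proof.
  intros H Hl. eapply Rle_trans; [|apply (ser_partial_le f l k); auto].
  destruct k; simpl; [lra|]. pose proof (cond_pos_sum f k H); lra.
Qed.

Lemma ser_finite f K : (forall k, (K < k)%nat -> f k = 0) -> infinite_sum f (sum_f_R0 f K).
Proof.
  intros H e He. exists K. intros n Hn. unfold R_dist.
  assert (sum_f_R0 f n = sum_f_R0 f K) as ->.
  { induction Hn; auto. simpl. rewrite IHHn, H; [ring|lia]. }
  rewrite Rminus_diag, Rabs_R0; auto.
Qed.

Lemma ser_unique f a b : infinite_sum f a -> infinite_sum f b -> a = b.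
Proof. intros; eapply UL_sequence; eauto. Qed.

Lemma cv_const c : Un_cv (fun _ => c) c.
Proof. intros e He; exists O; intros; unfold R_dist; rewrite Rminus_diag, Rabs_R0; auto. Qed.

Lemma lim_le_const u l c : (forall n, u n <= c) -> Un_cv u l -> l <= c.
Proof. intros H Hl. eapply Rle_cv_lim; [|exact Hl|apply cv_const]. auto. Qed.

Lemma lim_fin_sum (f : nat -> nat -> R) (l : nat -> R) K :
  (forall k, Un_cv (fun M => f M k) (l k)) -> Un_cv (fun M => sum_f_R0 (f M) K) (sum_f_R0 l K).
Proof.
  intros H. induction K; simpl; auto. apply CV_plus; auto.
Qed.

Lemma sum_swap (a : nat -> nat -> R) M K :
  sum_f_R0 (fun m => sum_f_R0 (fun k => a m k) K) M = sum_f_R0 (fun k => sum_f_R0 (fun m => a m k) M) K.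
Proof.
  induction M; simpl; auto. rewrite IHM, <- plus_sum. auto.
Qed.

Lemma tonelli (a : nat -> nat -> R) (b c : nat -> R) B :
  (forall m k, 0 <= a m k) ->
  (forall m, infinite_sum (fun k => a m k) (b m)) ->
  (forall k, infinite_sum (fun m => a m k) (c k)) ->
  infinite_sum b B -> infinite_sum c B.
Proof.
  intros Ha Hb Hc HB.
  assert (Hc0 : forall k, 0 <= c k) by (intros k; apply (ser_nonneg (fun m => a m k)); auto).
  assert (Hb0 : forall m, 0 <= b m) by (intros m; apply (ser_nonneg (fun k => a m k)); auto).
  assert (HCB : forall K, sum_f_R0 c K <= B).
  { intros K. apply (lim_le_const (fun M => sum_f_R0 (fun k => sum_f_R0 (fun m => a m k) M) K)).
    - intros M. rewrite <- sum_swap. eapply Rle_trans; [|apply (ser_partial_le b B M); auto].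
      apply sum_Rle; intros. apply ser_partial_le; auto.
    - apply lim_fin_sum. intros k; apply Hc. }
  destruct (growing_cv (sum_f_R0 c)) as [C HC].
  { intros n; simpl; specialize (Hc0 (S n)); lra. }
  { exists B; intros x [K ->]; auto. }
  assert (B <= C).
  { apply (lim_le_const (sum_f_R0 b)); auto. intros M.
    apply (lim_le_const (fun K => sum_f_R0 (fun m => sum_f_R0 (fun k => a m k) K) M)).
    - intros K. rewrite sum_swap. eapply Rle_trans; [|apply (growing_ineq (sum_f_R0 c) C); auto].
      + apply sum_Rle; intros. apply ser_partial_le; auto. intros; auto.
      + intros n; simpl; specialize (Hc0 (S n)); lra.
    - apply lim_fin_sum. intros m; apply Hb. }
  assert (C <= B) by (apply (lim_le_const (sum_f_R0 c)); auto).
  replace B with C by lra. exact HC.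
Qed.

Definition pgf (p : nat -> R) (s v : R) := infinite_sum (fun k => p k * s ^ k) v.

Lemma pow_01 s k : 0 <= s <= 1 -> 0 <= s ^ k <= 1.
Proof. intros Hs; induction k; simpl; nra. Qed.

Lemma pgf_exists p s : (forall k, 0 <= p k) -> infinite_sum p 1 -> 0 <= s <= 1 ->
  exists G, pgf p s G /\ 0 <= G <= 1.
Proof.
  intros H0 H1 Hs.
  assert (Ht : forall k, 0 <= p k * s ^ k <= p k).
  { intros k; pose proof (pow_01 s k Hs); specialize (H0 k); nra. }
  destruct (growing_cv (sum_f_R0 (fun k => p k * s ^ k))) as [G HG].
  { intros n; pose proof (Ht (S n)); simpl in *; lra. }
  { unfold has_ub, bound, is_upper_bound, EUn. exists 1; intros x [K ->]. eapply Rle_trans; [|apply (ser_partial_le p 1 K); auto].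
    apply sum_Rle; intros; apply Ht. }
  exists G; split; auto. split.
  - apply (ser_nonneg (fun k => p k * s ^ k)); auto. intros; apply Ht.
  - apply (ser_le (fun k => p k * s ^ k) p); auto. intros; apply Ht.
Qed.

Lemma pgf_convol p q s P Q : (forall k, 0 <= p k) -> (forall k, 0 <= q k) -> 0 <= s ->
  pgf p s P -> pgf q s Q -> pgf (convol p q) s (P * Q).
Proof.
  intros Hp Hq Hs HP HQ.
  assert (H := is_series_mult (fun k => p k * s ^ k) (fun k => q k * s ^ k) P Q).
  rewrite !is_series_Reals in H. unfold pgf.
  assert (Hnn : forall (r : nat -> R) l, (forall k, 0 <= r k) -> infinite_sum (fun k => r k * s ^ k) l ->
     ex_series (fun n => Rabs (r n * s ^ n))).
  { intros r l Hr Hl. exists l. apply is_series_Reals. eapply ser_ext; [|exact Hl].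
    intros k; simpl. rewrite Rabs_pos_eq; auto. apply Rmult_le_pos; auto; apply pow_le; auto. }
  specialize (H HP HQ (Hnn p P Hp HP) (Hnn q Q Hq HQ)).
  eapply ser_ext; [|exact H]. intros k. unfold convol. rewrite Rmult_comm, scal_sum.
  apply sum_eq. intros i Hi. replace (s ^ k) with (s ^ i * s ^ (k - i)) by (rewrite <- pow_add; f_equal; lia). ring.
Qed.

Lemma convol_nonneg p q : (forall k, 0 <= p k) -> (forall k, 0 <= q k) -> forall k, 0 <= convol p q k.
Proof. intros Hp Hq k. apply cond_pos_sum. intros; apply Rmult_le_pos; auto. Qed.

Lemma delta0_nonneg k : 0 <= delta0 k.
Proof. destruct k; simpl; lra. Qed.

Lemma convpow_nonneg p m : (forall k, 0 <= p k) -> forall k, 0 <= convpow p m k.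
Proof. intros Hp; induction m; simpl; [apply delta0_nonneg|]. apply convol_nonneg; auto. Qed.

Lemma pgf_delta0 s : pgf delta0 s 1.
Proof.
  unfold pgf. assert (H : infinite_sum (fun k => delta0 k * s ^ k) (sum_f_R0 (fun k => delta0 k * s ^ k) 0)).
  { apply ser_finite. intros k Hk; destruct k; [lia|]; simpl; ring. }
  replace (sum_f_R0 (fun k => delta0 k * s ^ k) 0) with 1 in H by (simpl; ring). exact H.
Qed.

Lemma pgf_convpow p s G m : (forall k, 0 <= p k) -> 0 <= s -> pgf p s G -> pgf (convpow p m) s (G ^ m).
Proof.
  intros Hp Hs HG. induction m; simpl; [apply pgf_delta0|].
  rewrite Rmult_comm. apply pgf_convol; auto. apply convpow_nonneg; auto.
Qed.

Lemma bern_nonneg q k : 0 <= q <= 1 -> 0 <= bernoulli q k.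
Proof. intros; destruct k as [|[|k]]; simpl; lra. Qed.

Lemma pgf_bern q s : pgf (bernoulli q) s (1 - q + q * s).
Proof.
  unfold pgf. assert (H : infinite_sum (fun k => bernoulli q k * s ^ k) (sum_f_R0 (fun k => bernoulli q k * s ^ k) 1)).
  { apply ser_finite. intros k Hk; destruct k as [|[|k]]; [lia|lia|]; simpl; ring. }
  replace (sum_f_R0 (fun k => bernoulli q k * s ^ k) 1) with (1 - q + q * s) in H by (simpl; ring). exact H.
Qed.

Lemma bern_ineq s k : 0 <= s <= 1 -> 1 - s ^ k <= INR k * (1 - s).
Proof.
  intros Hs. induction k; [simpl; lra|].
  rewrite S_INR. change (s ^ S k) with (s * s ^ k). pose proof (pow_01 s k Hs). nra.
Qed.

Lemma quad_ineq s k : 0 <= s <= 1 ->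
  0 <= s ^ k - 1 + INR k * (1 - s) <= INR k * INR (k - 1) * (1 - s).
Proof.
  intros Hs. assert (H : 0 <= s ^ k - 1 + INR k * (1 - s) <= INR k * (INR k - 1) * (1 - s)).
  { induction k; [simpl; lra|].
    pose proof (bern_ineq s k Hs). pose proof (pow_01 s k Hs). pose proof (pos_INR k).
    rewrite S_INR. change (s ^ S k) with (s * s ^ k). nra. }
  destruct k; [simpl; lra|]. replace (S k - 1)%nat with k by lia.
  rewrite S_INR in *. replace (INR k + 1 - 1) with (INR k) in H by ring. exact H.
Qed.

Lemma G_props p rho g2 s G : (forall k, 0 <= p k) -> infinite_sum p 1 ->
  infinite_sum (fun k => INR k * p k) rho ->
  infinite_sum (fun k => INR k * INR (k - 1) * p k) g2 -> 0 <= s <= 1 -> pgf p s G ->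
  0 <= rho /\ 1 - G <= rho * (1 - s) /\ Rabs (G - 1 - rho * (s - 1)) <= g2 * (1 - s).
Proof.
  intros H0 H1 Hr Hg Hs HG. split; [|split].
  - apply (ser_nonneg (fun k => INR k * p k)); auto. intros; apply Rmult_le_pos; auto; apply pos_INR.
  - apply (ser_le (fun k => p k - p k * s ^ k) (fun k => INR k * p k * (1 - s))).
    + intros k. pose proof (bern_ineq s k Hs). specialize (H0 k). nra.
    + apply ser_minus; auto.
    + apply ser_scal; auto.
  - assert (Hx : infinite_sum (fun k => p k * s ^ k - p k + INR k * p k * (1 - s)) (G - 1 + rho * (1 - s))).
    { apply ser_plus; [apply ser_minus; auto|apply ser_scal; auto]. }
    assert (0 <= G - 1 + rho * (1 - s)).
    {
      apply (ser_nonneg (fun k => p k * s ^ k - p k + INR k * p k * (1 - s))); auto.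
      intros k. pose proof (quad_ineq s k Hs). specialize (H0 k). nra. }
    assert (G - 1 + rho * (1 - s) <= g2 * (1 - s)).
    {
      apply (ser_le (fun k => p k * s ^ k - p k + INR k * p k * (1 - s)) (fun k => INR k * INR (k - 1) * p k * (1 - s))); auto.
      - intros k. pose proof (quad_ineq s k Hs). specialize (H0 k). nra.
      - apply ser_scal; auto. }
    rewrite Rabs_pos_eq; lra.
Qed.

Lemma exp_mono x y : x <= y -> exp x <= exp y.
Proof. intros H; destruct (Rle_lt_or_eq_dec _ _ H) as [Hl|He]; [left; apply exp_increasing; auto|rewrite He; lra]. Qed.

Lemma exp_le1 x : x <= 0 -> exp x <= 1.
Proof. intros; rewrite <- exp_0; apply exp_mono; auto. Qed.

Lemma exp_lip_aux u v : u <= v -> v <= 0 -> exp v - exp u <= v - u.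
Proof.
  intros H1 H2. pose proof (exp_ineq1_le (u - v)).
  replace (exp u) with (exp v * exp (u - v)) by (rewrite <- exp_plus; f_equal; ring).
  assert (exp v <= 1) by (apply exp_le1; auto).
  pose proof (exp_pos v). assert (exp (u - v) <= 1) by (apply exp_le1; lra). nra.
Qed.

Lemma exp_lip u v : u <= 0 -> v <= 0 -> Rabs (exp u - exp v) <= Rabs (u - v).
Proof.
  intros Hu Hv. destruct (Rle_dec u v).
  - pose proof (exp_lip_aux u v r Hv). assert (exp u <= exp v).
    { apply exp_mono; auto. }
    rewrite Rabs_left1, Rabs_left1; lra.
  - pose proof (exp_lip_aux v u ltac:(lra) Hu). assert (exp v <= exp u).
    { left; apply exp_increasing; lra. }
    rewrite Rabs_pos_eq, Rabs_pos_eq; lra.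
Qed.

Lemma exp_quad x : 0 <= x -> Rabs ((1 - x) - exp (- x)) <= x ^ 2.
Proof.
  intros Hx. pose proof (exp_ineq1_le (- x)). pose proof (exp_ineq1_le x).
  assert (exp (- x) * exp x = 1) by (rewrite <- exp_plus; replace (- x + x) with 0 by ring; apply exp_0).
  pose proof (exp_pos (- x)). pose proof (exp_pos x).
  assert (exp (- x) * (1 + x) <= 1) by nra.
  rewrite Rabs_left1; [|lra]. simpl. nra.
Qed.

Lemma step v G rho mu m g2 w s :
  0 <= s <= 1 -> 0 <= G <= 1 -> 1 - G <= rho * (1 - s) ->
  Rabs (G - 1 - rho * (s - 1)) <= g2 * (1 - s) -> 0 <= rho -> 0 <= mu -> 0 <= w -> 0 <= m <= 1 ->
  Rabs (v - exp (mu * (G - 1))) <= w * (1 - G) ->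
  Rabs (v * (1 - m + m * s) - exp ((rho * mu + m) * (s - 1))) <= (rho * w + mu * g2 + m ^ 2) * (1 - s).
Proof.
  intros Hs HG H1 H2 Hr Hmu Hw Hm Hv.
  set (B := 1 - m + m * s). set (a := exp (mu * (G - 1))). set (a' := exp (mu * rho * (s - 1))).
  set (b' := exp (m * (s - 1))).
  assert (HB : 0 <= B <= 1) by (unfold B; nra).
  assert (E : exp ((rho * mu + m) * (s - 1)) = a' * b') by (unfold a', b'; rewrite <- exp_plus; f_equal; ring).
  rewrite E.
  assert (Ha : Rabs (a - a') <= mu * g2 * (1 - s)).
  { unfold a, a'. eapply Rle_trans; [apply exp_lip; nra|].
    replace (mu * (G - 1) - mu * rho * (s - 1)) with (mu * (G - 1 - rho * (s - 1))) by ring.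
    rewrite Rabs_mult, Rabs_pos_eq; auto. rewrite Rmult_assoc. apply Rmult_le_compat_l; auto. }
  assert (Hb : Rabs (B - b') <= m ^ 2 * (1 - s)).
  { unfold B, b'. replace (1 - m + m * s) with (1 - m * (1 - s)) by ring.
    replace (m * (s - 1)) with (- (m * (1 - s))) by ring.
    eapply Rle_trans; [apply exp_quad; nra|].
    assert (0 <= m * m) by nra. assert ((1 - s) * (1 - s) <= 1 - s) by nra.
    pose proof (Rmult_le_compat_l (m * m) _ _ H H0). simpl. nra. }
  assert (Ha'0 : 0 <= a' <= 1).
  { unfold a'. split; [left; apply exp_pos|]. apply exp_le1.
    assert (0 <= mu * rho) by nra. nra. }
  replace (v * B - a' * b') with ((v - a) * B + (a - a') * B + a' * (B - b')) by ring.
  assert (Hv' : Rabs (v - a) <= w * rho * (1 - s)).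
  { eapply Rle_trans; [exact Hv|]. rewrite Rmult_assoc. apply Rmult_le_compat_l; auto. }
  pose proof (Rabs_triang ((v - a) * B + (a - a') * B) (a' * (B - b'))).
  pose proof (Rabs_triang ((v - a) * B) ((a - a') * B)).
  rewrite !Rabs_mult in *. rewrite (Rabs_pos_eq B), (Rabs_pos_eq a') in * by lra.
  pose proof (Rabs_pos (v - a)). pose proof (Rabs_pos (a - a')). pose proof (Rabs_pos (B - b')).
  assert (Rabs (v - a) * B <= Rabs (v - a)) by nra.
  assert (Rabs (a - a') * B <= Rabs (a - a')) by nra.
  assert (a' * Rabs (B - b') <= Rabs (B - b')) by nra.
  nra.
Qed.

Lemma key (r a u : nat -> R) (A : R) :
  (forall n, 0 <= r (S n) <= 1) ->
  cv_infty (fun N => sum_f_R0 (fun i => 1 - r (S i)) N) ->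
  Un_cv a A ->
  (forall n, u (S n) = r (S n) * u n + (1 - r (S n)) * a (S n)) ->
  Un_cv u A.
Proof.
  intros Hr Hinf Ha Hu e He.
  set (P := fun N => sum_f_R0 (fun i => 1 - r (S i)) N).
  destruct (Ha (e / 2) ltac:(lra)) as [N HN].
  set (Z := fun n => Rmax (Rabs (u n - A) - e / 2) 0).
  assert (HZ0 : forall n, 0 <= Z n) by (intros; apply Rmax_r).
  assert (HZs : forall n, (n >= N)%nat -> Z (S n) <= exp (- (1 - r (S n))) * Z n).
  { intros n Hn. specialize (HN (S n) ltac:(lia)). unfold R_dist in HN.
    pose proof (Hr n) as [r0 r1].
    assert (Rabs (u (S n) - A) <= r (S n) * Rabs (u n - A) + (1 - r (S n)) * (e / 2)).
    { rewrite Hu. replace (r (S n) * u n + (1 - r (S n)) * a (S n) - A) with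
        (r (S n) * (u n - A) + (1 - r (S n)) * (a (S n) - A)) by ring.
      eapply Rle_trans; [apply Rabs_triang|]. rewrite !Rabs_mult, (Rabs_pos_eq (r (S n))), (Rabs_pos_eq (1 - r (S n))) by lra.
      apply Rplus_le_compat_l. apply Rmult_le_compat_l; lra. }
    pose proof (exp_ineq1_le (- (1 - r (S n)))).
    pose proof (Rmax_l (Rabs (u n - A) - e / 2) 0). pose proof (HZ0 n).
    unfold Z at 1. apply Rmax_lub; [|apply Rmult_le_pos; [left; apply exp_pos|auto]].
    assert (Rabs (u n - A) - e / 2 <= Z n) by (unfold Z; apply Rmax_l).
    assert (r (S n) * (Rabs (u n - A) - e / 2) <= r (S n) * Z n) by (apply Rmult_le_compat_l; lra).
    assert ((1 + - (1 - r (S n))) * Z n <= exp (- (1 - r (S n))) * Z n) by (apply Rmult_le_compat_r; auto).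
    nra. }
  assert (Hind : forall k, Z (S N + k)%nat <= Z (S N) * exp (- (P (N + k)%nat - P N))).
  { intros k; induction k.
    - rewrite !Nat.add_0_r. replace (- (P N - P N)) with 0 by ring. rewrite exp_0. lra.
    - replace (S N + S k)%nat with (S (S N + k)) by lia.
      eapply Rle_trans; [apply HZs; lia|].
      replace (N + S k)%nat with (S (N + k)) by lia.
      replace (P (S (N + k))) with (P (N + k)%nat + (1 - r (S (S (N + k))))) by (unfold P; simpl; ring).
      replace (- (P (N + k)%nat + (1 - r (S (S (N + k)))) - P N)) with
        (- (1 - r (S (S N + k))) + - (P (N + k)%nat - P N)) by (replace (S N + k)%nat with (S (N + k)) by lia; ring).
      rewrite exp_plus. pose proof (exp_pos (- (1 - r (S (S N + k))))).
      nra. }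
  set (Y := Z (S N)).
  assert (HY : 0 <= Y) by apply HZ0.
  destruct (Hinf (P N - ln (e / (2 * (Y + 1))))) as [N2 HN2].
  exists (S (N + N2)). intros n Hn.
  replace n with (S N + (n - S N))%nat by lia.
  set (k := (n - S N)%nat).
  specialize (HN2 (N + k)%nat ltac:(unfold k; lia)). fold (P (N + k)%nat) in HN2.
  assert (Hexp : exp (- (P (N + k)%nat - P N)) < e / (2 * (Y + 1))).
  { rewrite <- (exp_ln (e / (2 * (Y + 1)))).
    - apply exp_increasing. lra.
    - apply Rdiv_lt_0_compat; lra. }
  specialize (Hind k).
  assert (Y * exp (- (P (N + k)%nat - P N)) <= Y * (e / (2 * (Y + 1)))) by (apply Rmult_le_compat_l; lra).
  assert (Y * (e / (2 * (Y + 1))) < e / 2).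
  { unfold Rdiv. rewrite Rinv_mult. 
    assert (Y * / (Y + 1) < 1). { apply (Rmult_lt_reg_r (Y + 1)); [lra|]. rewrite Rmult_assoc, Rinv_l by lra. lra. }
    pose proof (Rinv_0_lt_compat (Y+1) ltac:(lra)). nra. }
  unfold R_dist. pose proof (Rmax_l (Rabs (u (S N + k)%nat - A) - e / 2) 0).
  fold (Z (S N + k)%nat) in H1. fold Y in Hind. lra.
Qed.

Lemma lim_abs_le u L c N : Un_cv u L -> (forall n, (n >= N)%nat -> Rabs (u n) <= c) -> Rabs L <= c.
Proof.
  intros Hu Hc. destruct (Rle_dec (Rabs L) c) as [|Hn]; auto. exfalso.
  destruct (Hu (Rabs L - c) ltac:(lra)) as [N' HN']. unfold R_dist in HN'.
  specialize (HN' (N + N')%nat ltac:(lia)). specialize (Hc (N + N')%nat ltac:(lia)).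
  pose proof (Rabs_triang_inv L (u (N + N')%nat)). rewrite Rabs_minus_sym in HN'. lra.
Qed.

Lemma geom_le s M : 0 <= s <= 1/2 -> sum_f_R0 (fun i => s ^ i) M <= 2.
Proof.
  intros Hs. rewrite tech3 by lra. pose proof (pow_01 s (S M) ltac:(lra)).
  apply (Rmult_le_reg_r (1 - s)); [lra|]. unfold Rdiv. rewrite Rmult_assoc, Rinv_l by lra. nra.
Qed.

Lemma tail_bound (d : nat -> R) s D k : (forall j, Rabs (d j) <= 2) -> 0 <= s <= 1/2 ->
  infinite_sum (fun j => d j * s ^ j) D ->
  Rabs (D - sum_f_R0 (fun j => d j * s ^ j) k) <= 4 * s ^ (S k).
Proof.
  intros Hd Hs HD.
  apply (lim_abs_le (fun n => sum_f_R0 (fun j => d j * s ^ j) n - sum_f_R0 (fun j => d j * s ^ j) k) _ _ (S k)).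
  - apply CV_minus; auto. apply cv_const.
  - intros n Hn. rewrite (tech2 _ k n) by lia.
    replace (sum_f_R0 (fun j => d j * s ^ j) k + sum_f_R0 (fun i => d (S k + i)%nat * s ^ (S k + i)) (n - S k) - sum_f_R0 (fun j => d j * s ^ j) k)
      with (sum_f_R0 (fun i => d (S k + i)%nat * s ^ (S k + i)) (n - S k)) by ring.
    eapply Rle_trans; [apply sum_f_R0_triangle|].
    eapply Rle_trans with (sum_f_R0 (fun i => s ^ i * (2 * s ^ (S k))) (n - S k)).
    + apply sum_Rle. intros i _. rewrite Rabs_mult, pow_add, (Rabs_pos_eq (s ^ S k * s ^ i)).
      2: { apply Rmult_le_pos; apply pow_le; lra. }
      pose proof (Hd (S k + i)%nat). pose proof (pow_le s (S k) ltac:(lra)). pose proof (pow_le s i ltac:(lra)).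
      assert (0 <= s ^ S k * s ^ i) by (apply Rmult_le_pos; auto). pose proof (Rmult_le_compat_r _ _ _ H2 H). nra.
    + rewrite <- scal_sum. pose proof (geom_le s (n - S k) Hs). pose proof (pow_le s (S k) ltac:(lra)). assert (0 <= 2 * s ^ S k) by lra. pose proof (Rmult_le_compat_l _ _ _ H1 H). change (fun i : nat => s ^ i) with (pow s) in H2. lra.
Qed.

Lemma extract (d : nat -> nat -> R) (δ : nat -> R) :
  (forall n j, Rabs (d n j) <= 2) -> Un_cv δ 0 ->
  (forall n s, 0 < s <= 1/2 -> exists D, infinite_sum (fun j => d n j * s ^ j) D /\ Rabs D <= δ n) ->
  forall k, Un_cv (fun n => d n k) 0.
Proof.
  intros Hd Hδ HD k. induction k as [k IH] using lt_wf_ind.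
  set (V := fun n => sum_f_R0 (fun j => if (j <? k)%nat then Rabs (d n j) else 0) k).
  assert (HV : Un_cv V 0).
  { unfold V. assert (HZ : sum_f_R0 (fun _ => 0) k = 0) by (clear; induction k; simpl; [auto|rewrite IHk; ring]).
    rewrite <- HZ at 1.
    apply (lim_fin_sum (fun n j => if (j <? k)%nat then Rabs (d n j) else 0) (fun _ => 0)). intros j. destruct (j <? k)%nat eqn:E.
    - apply Nat.ltb_lt in E. specialize (IH j E).
      intros e He; destruct (IH e He) as [N HN]; exists N; intros n Hn.
      specialize (HN n Hn). unfold R_dist in *. rewrite Rminus_0_r in *. rewrite Rabs_Rabsolu. auto.
    - apply cv_const. }
  assert (Hmain : forall n s, 0 < s <= 1/2 -> s ^ k * Rabs (d n k) <= δ n + V n + 4 * s ^ (S k)).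
  { intros n s Hs. destruct (HD n s Hs) as [D [HD1 HD2]].
    pose proof (tail_bound (d n) s D k (Hd n) ltac:(lra) HD1) as Ht.
    assert (Hsplit : sum_f_R0 (fun j => d n j * s ^ j) k = d n k * s ^ k +
        sum_f_R0 (fun j => if (j <? k)%nat then d n j * s ^ j else 0) k).
    { destruct k as [|k']; [simpl; ring|]. simpl. rewrite Nat.ltb_irrefl.
      rewrite (sum_eq (fun j => if (j <? S k')%nat then d n j * s ^ j else 0) (fun j => d n j * s ^ j)).
      - ring.
      - intros i Hi. replace (i <? S k')%nat with true; auto. symmetry; apply Nat.ltb_lt; lia. }
    assert (HW : Rabs (sum_f_R0 (fun j => if (j <? k)%nat then d n j * s ^ j else 0) k) <= V n).
    { eapply Rle_trans; [apply sum_f_R0_triangle|]. apply sum_Rle. intros i _.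
      destruct (i <? k)%nat; [|rewrite Rabs_R0; lra]. rewrite Rabs_mult.
      pose proof (pow_01 s i ltac:(lra)). rewrite (Rabs_pos_eq (s ^ i)) by lra.
      pose proof (Rabs_pos (d n i)). nra. }
    rewrite Hsplit in Ht.
    pose proof (pow_le s k ltac:(lra)).
    replace (s ^ k * Rabs (d n k)) with (Rabs (d n k * s ^ k)) by (rewrite Rabs_mult, (Rabs_pos_eq (s ^ k)) by lra; ring).
    set (W := sum_f_R0 (fun j => if (j <? k)%nat then d n j * s ^ j else 0) k) in *.
    pose proof (Rabs_triang_inv D (d n k * s ^ k + W)).
    pose proof (Rabs_triang (d n k * s ^ k) W).
    pose proof (Rabs_triang_inv (d n k * s ^ k) (d n k * s ^ k + W)).
    replace (d n k * s ^ k - (d n k * s ^ k + W)) with (- W) in H2 by ring. rewrite Rabs_Ropp in H2.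
    rewrite Rabs_minus_sym in Ht.
    pose proof (Rabs_triang_inv (d n k * s ^ k + W) D). lra. }
  intros e He.
  set (s := Rmin (1/2) (e / 8)).
  assert (Hs : 0 < s <= 1/2) by (unfold s; split; [apply Rmin_glb_lt; lra|apply Rmin_l]).
  assert (Hs8 : s <= e / 8) by (unfold s; apply Rmin_r).
  assert (Hsk : 0 < s ^ k) by (apply pow_lt; lra).
  pose proof (CV_plus _ _ _ _ Hδ HV) as Hsum. rewrite Rplus_0_r in Hsum.
  destruct (Hsum (s ^ k * (e / 2)) ltac:(nra)) as [N HN].
  exists N. intros n Hn. specialize (HN n Hn). unfold R_dist in *. rewrite Rminus_0_r in *.
  specialize (Hmain n s Hs).
  pose proof (Rle_abs (δ n + V n)).
  assert (4 * s ^ S k <= s ^ k * (e / 2)) by (change (s ^ S k) with (s * s ^ k); nra).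
  assert (s ^ k * Rabs (d n k) < s ^ k * e) by lra.
  apply (Rmult_lt_reg_l (s ^ k)); auto.
Qed.

Fixpoint muf (rho m1 : nat -> R) (n : nat) : R :=
  match n with O => 0 | S n' => rho (S n') * muf rho m1 n' + m1 (S n') end.
Fixpoint wf (rho m1 g2 : nat -> R) (n : nat) : R :=
  match n with O => 0 | S n' => rho (S n') * wf rho m1 g2 n' + muf rho m1 n' * g2 (S n') + m1 (S n') ^ 2 end.

Lemma cv_ext u v l : (forall n, u n = v n) -> Un_cv u l -> Un_cv v l.
Proof. intros H Hu e He; destruct (Hu e He) as [N HN]; exists N; intros; rewrite <- H; auto. Qed.

Lemma cv_pred u l : Un_cv u l -> Un_cv (fun k => u (pred k)) l.
Proof. intros Hu e He; destruct (Hu e He) as [N HN]; exists (S N); intros n Hn; apply HN; lia. Qed.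

Lemma pgf_poisson lam s : pgf (poisson lam) s (exp (lam * (s - 1))).
Proof.
  pose proof (proj2_sig (exist_exp (lam * s))) as H. change (exp_in (lam * s) (exp (lam * s))) in H.
  unfold exp_in in H. apply (ser_scal _ _ (exp (- lam))) in H.
  replace (exp (lam * (s - 1))) with (exp (lam * s) * exp (- lam)) by (rewrite <- exp_plus; f_equal; ring).
  eapply ser_ext; [|exact H]. intros k; simpl. unfold poisson. rewrite Rpow_mult_distr. unfold Rdiv. ring.
Qed.

Lemma poisson_nonneg lam k : 0 <= lam -> 0 <= poisson lam k.
Proof.
  intros H. unfold poisson. apply Rmult_le_pos; [apply Rmult_le_pos; [left; apply exp_pos|apply pow_le; auto]|].
  left; apply Rinv_0_lt_compat, lt_0_INR, lt_O_fact.
Qed.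

Theorem theorem1
  (xi : nat -> nat -> R)      (* xi n = law of xi_{n,1} (n >= 1) *)
  (m1 : nat -> R)             (* eps_n ~ Bernoulli(m1 n) *)
  (rho g2 : nat -> R)         (* rho n = G_n'(1), g2 n = G_n''(1) *)
  (lam : R)
  (L : nat -> nat -> R)       (* L n = law of X_n *)
  (Hxi : forall n, (1 <= n)%nat -> is_pmf (xi n))
  (Hm1 : forall n, (1 <= n)%nat -> 0 <= m1 n <= 1)
  (Hrho : forall n, (1 <= n)%nat ->
            infinite_sum (fun k => INR k * xi n k) (rho n))
  (Hg2 : forall n, (1 <= n)%nat ->
            infinite_sum (fun k => INR k * INR (k - 1) * xi n k) (g2 n))
  (Hlt1 : forall n, (1 <= n)%nat -> rho n < 1)
  (Hlim1 : Un_cv rho 1)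
  (Hdiv : cv_infty (fun N => sum_f_R0 (fun i => 1 - rho (S i)) N))
  (Hg2lim : Un_cv (fun n => g2 n / (1 - rho n)) 0)
  (Hlam : 0 <= lam)
  (Hmlim : Un_cv (fun n => m1 n / (1 - rho n)) lam)
  (HL : is_BPI_law xi (fun n => bernoulli (m1 n)) L) :
  conv_in_dist L (poisson lam).
Proof.
  destruct HL as [HL0 HLS].
  set (mu := muf rho m1). set (w := wf rho m1 g2).
  assert (Hrho0 : forall n, 0 <= rho (S n)).
  { intros n. destruct (Hxi (S n) ltac:(lia)) as [Hx0 Hx1].
    apply (ser_nonneg (fun k => INR k * xi (S n) k)); [|apply Hrho; lia].
    intros; apply Rmult_le_pos; auto; apply pos_INR. }
  assert (Hg20 : forall n, 0 <= g2 (S n)).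
  { intros n. destruct (Hxi (S n) ltac:(lia)) as [Hx0 Hx1].
    apply (ser_nonneg (fun k => INR k * INR (k - 1) * xi (S n) k)); [|apply Hg2; lia].
    intros; repeat apply Rmult_le_pos; auto; apply pos_INR. }
  assert (Hmu0 : forall n, 0 <= mu n).
  { induction n; [change (0 <= 0); lra|]. pose proof (Hm1 (S n) ltac:(lia)). pose proof (Hrho0 n).
    change (0 <= rho (S n) * mu n + m1 (S n)). nra. }
  assert (Hw0 : forall n, 0 <= w n).
  { induction n; [change (0 <= 0); lra|]. pose proof (Hm1 (S n) ltac:(lia)). pose proof (Hrho0 n).
    pose proof (Hmu0 n). pose proof (Hg20 n).
    change (0 <= rho (S n) * w n + mu n * g2 (S n) + m1 (S n) ^ 2). nra. }
  assert (Inv : forall n, (forall k, 0 <= L n k) /\ forall s, 0 <= s <= 1 ->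
     exists v, pgf (L n) s v /\ Rabs (v - exp (mu n * (s - 1))) <= w n * (1 - s)).
  { induction n as [|n [IH0 IH1]].
    - rewrite HL0. split; [apply delta0_nonneg|]. intros s Hs. exists 1. split; [apply pgf_delta0|].
      change (Rabs (1 - exp (0 * (s - 1))) <= 0 * (1 - s)). replace (0 * (s - 1)) with 0 by ring. rewrite exp_0, Rminus_diag, Rabs_R0. lra.
    - destruct (Hxi (S n) ltac:(lia)) as [Hx0 Hx1].
      pose proof (Hm1 (S n) ltac:(lia)) as Hm.
      split.
      + intros k. apply (ser_nonneg _ _ (fun m => _) (HLS n k)) || idtac.
        apply (ser_nonneg (fun m => L n m * convol (convpow (xi (S n)) m) (bernoulli (m1 (S n))) k)); [|apply HLS].
        intros m. apply Rmult_le_pos; auto. apply convol_nonneg; [apply convpow_nonneg; auto|]. intros; apply bern_nonneg; auto.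
      + intros s Hs.
        destruct (pgf_exists (xi (S n)) s Hx0 Hx1 Hs) as [Gs [HGs HG01]].
        destruct (G_props (xi (S n)) (rho (S n)) (g2 (S n)) s Gs Hx0 Hx1 (Hrho (S n) ltac:(lia)) (Hg2 (S n) ltac:(lia)) Hs HGs)
          as [_ [HG1 HG2]].
        destruct (IH1 Gs HG01) as [v [Hv1 Hv2]].
        set (Bs := 1 - m1 (S n) + m1 (S n) * s).
        exists (v * Bs). split.
        * unfold pgf.
          apply (tonelli (fun m k => L n m * convol (convpow (xi (S n)) m) (bernoulli (m1 (S n))) k * s ^ k)
                   (fun m => L n m * (Gs ^ m * Bs))).
          -- intros m k. repeat apply Rmult_le_pos; auto.
             ++ apply convol_nonneg; [apply convpow_nonneg; auto|]. intros; apply bern_nonneg; auto.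
             ++ apply pow_le; lra.
          -- intros m. replace (L n m * (Gs ^ m * Bs)) with ((Gs ^ m * Bs) * L n m) by ring.
             eapply ser_ext; [|apply (ser_scal (fun k => convol (convpow (xi (S n)) m) (bernoulli (m1 (S n))) k * s ^ k) _ (L n m))].
             ++ intros k; simpl. ring.
             ++ apply pgf_convol; [apply convpow_nonneg; auto|intros; apply bern_nonneg; auto|lra| |].
                ** apply pgf_convpow; auto; lra.
                ** apply pgf_bern.
          -- intros k. apply ser_scal. apply HLS.
          -- eapply ser_ext; [|apply (ser_scal _ _ Bs Hv1)]. intros m; simpl; ring.
        * change (mu (S n)) with (rho (S n) * mu n + m1 (S n)).
          change (w (S n)) with (rho (S n) * w n + mu n * g2 (S n) + m1 (S n) ^ 2).
          apply (step v Gs); auto.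
  }
  assert (H1r : Un_cv (fun k => 1 - rho k) 0).
  { replace 0 with (1 - 1) by ring. apply CV_minus; [apply cv_const|auto]. }
  assert (Hr01 : forall n, 0 <= rho (S n) <= 1).
  { intros n; split; auto. left; apply Hlt1; lia. }
  assert (Hmucv : Un_cv mu lam).
  { apply (key rho (fun n => m1 n / (1 - rho n)) mu lam Hr01 Hdiv Hmlim).
    intros n. change (mu (S n)) with (rho (S n) * mu n + m1 (S n)).
    pose proof (Hlt1 (S n) ltac:(lia)). field. lra. }
  assert (Hwcv : Un_cv w 0).
  { apply (key rho (fun k => mu (pred k) * (g2 k / (1 - rho k)) + ((1 - rho k) * (m1 k / (1 - rho k))) * (m1 k / (1 - rho k))) w 0 Hr01 Hdiv).
    - replace 0 with (lam * 0 + (0 * lam) * lam) by ring.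
      apply CV_plus; [apply CV_mult; [apply cv_pred; auto|auto]|apply CV_mult; [apply CV_mult|]; auto].
    - intros n. change (w (S n)) with (rho (S n) * w n + mu n * g2 (S n) + m1 (S n) ^ 2).
      pose proof (Hlt1 (S n) ltac:(lia)). simpl pred. field. lra. }
  set (δ := fun n => w n + Rabs (mu n - lam)).
  assert (Hδ : Un_cv δ 0).
  { replace 0 with (0 + 0) by ring. apply CV_plus; auto.
    intros e He; destruct (Hmucv e He) as [N HN]; exists N; intros n Hn.
    specialize (HN n Hn). unfold R_dist in *. rewrite Rminus_0_r, Rabs_Rabsolu. auto. }
  assert (HL1 : forall n k, L n k <= 1).
  { intros n k. destruct (Inv n) as [I0 I1]. destruct (I1 1 ltac:(lra)) as [v [Hv1 Hv2]].
    replace (1 - 1) with 0 in Hv2 by ring. rewrite Rmult_0_r, exp_0, Rmult_0_r in Hv2.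
    assert (v = 1) by (pose proof (Rabs_pos (v - 1)); destruct (Rabs_le_between' _ _ _ Hv2) || idtac;
      destruct (Rcase_abs (v - 1)); [rewrite Rabs_left in Hv2; lra|rewrite Rabs_right in Hv2; lra]). subst v.
    replace (L n k) with (L n k * 1 ^ k) by (rewrite pow1; ring).
    apply (ser_term_le (fun k => L n k * 1 ^ k)); auto. intros; rewrite pow1; rewrite Rmult_1_r; auto. }
  assert (HP1 : forall k, poisson lam k <= 1).
  { intros k. pose proof (pgf_poisson lam 1) as H. replace (lam * (1 - 1)) with 0 in H by ring.
    rewrite exp_0 in H. replace (poisson lam k) with (poisson lam k * 1 ^ k) by (rewrite pow1; ring).
    apply (ser_term_le (fun k => poisson lam k * 1 ^ k)); auto. intros; rewrite pow1, Rmult_1_r; apply poisson_nonneg; auto. }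
  set (d := fun n j => L n j - poisson lam j).
  assert (Hdcv : forall k, Un_cv (fun n => d n k) 0).
  { apply (extract d δ).
    - intros n j. unfold d. destruct (Inv n) as [I0 _]. pose proof (I0 j). pose proof (HL1 n j).
      pose proof (HP1 j). pose proof (poisson_nonneg lam j Hlam). unfold Rabs; destruct Rcase_abs; lra.
    - exact Hδ.
    - intros n s Hs. destruct (Inv n) as [_ I1]. destruct (I1 s ltac:(lra)) as [v [Hv1 Hv2]].
      exists (v - exp (lam * (s - 1))). split.
      + eapply ser_ext; [|apply (ser_minus _ _ _ _ Hv1 (pgf_poisson lam s))]. intros j; unfold d; simpl; ring.
      + unfold δ.
        assert (Hl : Rabs (exp (mu n * (s - 1)) - exp (lam * (s - 1))) <= Rabs (mu n - lam)).
        { eapply Rle_trans; [apply exp_lip; pose proof (Hmu0 n); nra|].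
          replace (mu n * (s - 1) - lam * (s - 1)) with ((mu n - lam) * (s - 1)) by ring.
          rewrite Rabs_mult. pose proof (Rabs_pos (mu n - lam)).
          rewrite (Rabs_left1 (s - 1)) by lra. nra. }
        pose proof (Rabs_triang (v - exp (mu n * (s - 1))) (exp (mu n * (s - 1)) - exp (lam * (s - 1)))).
        replace (v - exp (mu n * (s - 1)) + (exp (mu n * (s - 1)) - exp (lam * (s - 1)))) with (v - exp (lam * (s - 1))) in H by ring.
        pose proof (Hw0 n). assert (w n * (1 - s) <= w n) by nra. lra. }
  intros k. apply (lim_fin_sum L (poisson lam)). intros j.
  pose proof (CV_plus _ _ _ _ (Hdcv j) (cv_const (poisson lam j))) as Hc. rewrite Rplus_0_l in Hc.
  eapply cv_ext; [|exact Hc]. intros n; unfold d; simpl; ring.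
Qed.
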